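(* In the two-party one-way communication (Holevo–Frenkel–Weiner) scenario, classical shared randomness can increase the utility of a perfect one-bit classical channel: there exist finite sets $\mathcal{X},\mathcal{B}$ and a payoff function $\beta$ on correlations $P(\mathcal{B}|\mathcal{X})$ such that $\sup_{P\in\mathcal{C}_{\mathrm{SR}}}\beta(P)>\sup_{P\in\mathcal{C}}\beta(P)$.
   Context: Scenario: Alice receives an input $x$ from a finite set $\mathcal{X}$, Bob must output $b$ from a finite set $\mathcal{B}$; a correlation is a conditional distribution $P=(P(b|x))_{x\in\mathcal{X},b\in\mathcal{B}}$, and a task is a payoff function $\beta$ assigning a real number to each correlation. The utility of a resource for a task $\beta$ is $\sup\beta(P)$ over all correlations $P$ achievable with that resource. $\mathcal{C}$ (one bit of classical communication, no shared randomness, local randomness allowed): the set of correlations of the form $P(b|x)=\sum_{m\in\{0,1\}}E(m|x)D(b|m)$, where $E(\cdot|x)$ is a probability distribution on $\{0,1\}$ for each $x$ and $D(\cdot|m)$ is a probability distribution on $\mathcal{B}$ for each $m$. $\mathcal{C}_{\mathrm{SR}}$ (one bit of classical communication assisted by an arbitrary finite amount of classical shared randomness): the set of all finite convex combinations $\sum_{\lambda}q_\lambda P_\lambda$ with $q_\lambda\ge0$, $\sum_\lambda q_\lambda=1$, and each $P_\lambda\in\mathcal{C}$. *)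

(* Defs.v *)
From HB Require Import structures.
From mathcomp Require Import all_boot all_order all_algebra.
From mathcomp Require Import all_classical all_reals.
From mathcomp Require Import ereal Rstruct.
From Stdlib Require Import Reals.
Set Implicit Arguments. Unset Strict Implicit. Unset Printing Implicit Defensive.
Import Order.TTheory GRing.Theory Num.Theory.
Local Open Scope classical_set_scope.
Local Open Scope ring_scope.

Definition is_distr (T : finType) (p : T -> R) : Prop :=
  (forall t, 0 <= p t) /\ \sum_(t : T) p t = 1.

(* A correlation P(b|x) is represented as a function X -> B -> R. *)

(* C : one bit of classical communication (message m in bool = {0,1}),
   local randomness for encoder E and decoder D, no shared randomness. *)
Definition Cbit (X B : finType) : set (X -> B -> R) :=
  [set P | exists (E : X -> bool -> R) (D : bool -> B -> R),
      (forall x, is_distr (E x)) /\ (forall m, is_distr (D m)) /\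
      (forall x b, P x b = \sum_(m : bool) E x m * D m b)].

Definition CbitSR (X B : finType) : set (X -> B -> R) :=
  [set P | exists (n : nat) (q : 'I_n -> R) (Ps : 'I_n -> X -> B -> R),
      is_distr q /\ (forall i, Cbit (Ps i)) /\
      (forall x b, P x b = \sum_(i < n) q i * Ps i x b)].

Definition utility (X B : finType) (beta : (X -> B -> R) -> R)
  (S : set (X -> B -> R)) : \bar R :=
  ereal_sup [set (beta P)%:E | P in S].

Arguments Cbit X B : clear implicits.
Arguments CbitSR X B : clear implicits.

(* Main.v *)
Require Import Defs.
From mathcomp Require Import all_boot all_order all_algebra.
From mathcomp Require Import all_classical all_reals.
From mathcomp Require Import ereal Rstruct.
From Stdlib Require Import Reals.
From mathcomp Require Import ring lra.
Import Order.TTheory GRing.Theory Num.Theory.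
Local Open Scope ring_scope.

Definition ind (b : 'I_3) (k : nat) : R := if val b == k then 1 else 0.

Definition det3 (P : 'I_3 -> 'I_3 -> R) : R :=
  P (@inord 2 0%nat) (@inord 2 0%nat) * (P (@inord 2 1%nat) (@inord 2 1%nat) * P (@inord 2 2%nat) (@inord 2 2%nat) - P (@inord 2 1%nat) (@inord 2 2%nat) * P (@inord 2 2%nat) (@inord 2 1%nat))
  - P (@inord 2 0%nat) (@inord 2 1%nat) * (P (@inord 2 1%nat) (@inord 2 0%nat) * P (@inord 2 2%nat) (@inord 2 2%nat) - P (@inord 2 1%nat) (@inord 2 2%nat) * P (@inord 2 2%nat) (@inord 2 0%nat))
  + P (@inord 2 0%nat) (@inord 2 2%nat) * (P (@inord 2 1%nat) (@inord 2 0%nat) * P (@inord 2 2%nat) (@inord 2 1%nat) - P (@inord 2 1%nat) (@inord 2 1%nat) * P (@inord 2 2%nat) (@inord 2 0%nat)).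

Definition beta (P : 'I_3 -> 'I_3 -> R) : R := if det3 P == 0 then 0 else 1.

Lemma sumb (F : bool -> R) : (\sum_(m : bool) F m = F true + F false).
Proof. by rewrite big_bool. Qed.

Lemma det3_Cbit P : Cbit 'I_3 'I_3 P -> det3 P = 0.
Proof.
move=> [E [D [_ [_ HP]]]].
rewrite /det3 !HP !sumb.
rewrite ?RplusE ?RminusE ?RmultE ?R0E. ring.
Qed.

Lemma sum_ind k : (k < 3)%nat -> \sum_(b : 'I_3) ind b k = 1.
Proof.
move=> hk; rewrite !big_ord_recr big_ord0 /= /ind /=.
by case: k hk => [|[|[|]]] //= _; rewrite ?add0r ?addr0.
Qed.

Lemma det_Cbit (e : 'I_3 -> bool) (g : bool -> nat) :
  (forall m, (g m < 3)%nat) ->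
  Cbit 'I_3 'I_3 (fun x b => ind b (g (e x))).
Proof.
move=> hg.
exists (fun x m => if m == e x then 1 else 0), (fun m b => ind b (g m)).
split; [|split].
- move=> x; split; first by move=> t; case: ifP.
  by rewrite big_bool; case: (e x) => /=; rewrite ?addr0 ?add0r.
- by move=> m; split; [move=> t; rewrite /ind; case: ifP|exact: sum_ind].
- move=> x b; rewrite big_bool; case: (e x) => /=; 
  by rewrite ?mul1r ?mul0r ?addr0 ?add0r.
Qed.

Definition e1 (x : 'I_3) : bool := val x == 0%nat.
Definition g1 (m : bool) : nat := if m then 0%nat else 1%nat.
Definition e2 (x : 'I_3) : bool := val x != 2%nat.
Definition g2 (m : bool) : nat := if m then 0%nat else 2%nat.

Definition Pw (x b : 'I_3) : R := (2^-1 * ind b (g1 (e1 x)) + 2^-1 * ind b (g2 (e2 x))).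

Lemma Pw_SR : CbitSR 'I_3 'I_3 Pw.
Proof.
exists 2%nat, (fun _ => 2^-1),
  (fun i => if val i == 0%nat then (fun x b => ind b (g1 (e1 x)))
            else (fun x b => ind b (g2 (e2 x)))).
split; [|split].
- split; first by move=> _; rewrite invr_ge0; lra.
  rewrite big_ord_recr big_ord1 /=; lra.
- move=> i; case: ifP => _; apply: det_Cbit => -[]//.
- by move=> x b; rewrite big_ord_recr big_ord1 /=.
Qed.

Lemma det_Pw : det3 Pw != 0.
Proof.
have v0 : val (@inord 2 0%nat) = 0%nat by apply: inordK.
have v1 : val (@inord 2 1%nat) = 1%nat by apply: inordK.
have v2 : val (@inord 2 2%nat) = 2%nat by apply: inordK.
rewrite /det3 /Pw /ind /e1 /e2 /g1 /g2 !v0 !v1 !v2 /=.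
rewrite ?RplusE ?RminusE ?RmultE ?R0E.
apply/eqP. lra.
Qed.

Local Open Scope ereal_scope.

Theorem theorem1 :
  exists (X B : finType) (beta : (X -> B -> R) -> R),
    utility beta (Cbit X B) < utility beta (CbitSR X B).
Proof.
exists 'I_3, 'I_3, beta.
apply: (@le_lt_trans _ _ 0%:E).
- apply: ge_ereal_sup => _ [P HP <-].
  by rewrite /beta det3_Cbit // eqxx.
- apply: (@lt_le_trans _ _ 1%:E); first by rewrite lte_fin ltr01.
  apply: ereal_sup_ubound; exists Pw; first exact: Pw_SR.
  by rewrite /beta (negbTE det_Pw).
Qed.
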